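(* Let $(x,y)$ be a vertex of the polytope $P$. Then either $y$ is integral, or $y$ has exactly two noninteger components and for every $i\in F$ we have $x_i=0$ or $x_i=s_iy_i$.
   Context: Given a finite set $F$ of facilities with capacities $s_i\ge 0$, a demand $d$ and an integer $k$, let $P\subseteq\mathbb{R}^F\times\mathbb{R}^F$ be the set of $(x,y)$ satisfying $\sum_{i\in F}x_i=d$, $\sum_{i\in F}y_i=k$ (equality), $0\le x_i\le s_iy_i$ for all $i\in F$, and $0\le y_i\le 1$ for all $i\in F$. *)

(* Defs.v *)
From HB Require Import structures.
From mathcomp Require Import all_boot all_order all_algebra.
Set Implicit Arguments. Unset Strict Implicit. Unset Printing Implicit Defensive.
Import Order.TTheory GRing.Theory Num.Theory.
Local Open Scope ring_scope.

Definition inP (R : realFieldType) (F : finType) (s : F -> R) (d : R) (k : int)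
    (x y : F -> R) : Prop :=
  [/\ \sum_(i : F) x i = d,
      \sum_(i : F) y i = k%:~R,
      (forall i, 0 <= x i /\ x i <= s i * y i) &
      (forall i, 0 <= y i /\ y i <= 1)].

Definition vertexP (R : realFieldType) (F : finType) (s : F -> R) (d : R) (k : int)
    (x y : F -> R) : Prop :=
  inP s d k x y /\
  forall (x1 y1 x2 y2 : F -> R) (t : R),
    inP s d k x1 y1 -> inP s d k x2 y2 -> 0 < t -> t < 1 ->
    (forall i, x i = t * x1 i + (1 - t) * x2 i) ->
    (forall i, y i = t * y1 i + (1 - t) * y2 i) ->
    (forall i, x1 i = x2 i /\ y1 i = y2 i).

(* Main.v *)
Require Import Defs.
From HB Require Import structures.
From mathcomp Require Import all_boot all_order all_algebra.
From mathcomp Require Import zify ring lra.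
Import Order.TTheory GRing.Theory Num.Theory.
Local Open Scope ring_scope.

Section S.
Variable R : archiRealFieldType.

Lemma int01 (r : R) : 0 <= r <= 1 -> (r \is a Num.int) = ((r == 0) || (r == 1)).
Proof.
case/andP => h0 h1; apply/idP/idP.
- move/intrP => [z Hz]; subst r.
  rewrite ler0z in h0; rewrite lerz1 in h1.
  have : (z == 0) || (z == 1) by move: h0 h1; case: z => [[|[|n]]|n]. 
  by case/orP => /eqP ->; rewrite ?eqxx ?orbT.
- by case/orP => /eqP ->; rewrite ?archimedean.Num.Theory.int_num0 ?archimedean.Num.Theory.int_num1.
Qed.

Lemma small1 (A B : R) : 0 <= A -> (A = 0 -> B = 0) ->
  exists2 m, 0 < m & forall e, `|e| <= m -> 0 <= A + e * B.
Proof.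
move=> hA hB; have [A0|Apos] := eqVneq A 0.
  by exists 1 => // e _; rewrite A0 (hB A0) mulr0 addr0.
have Ap : 0 < A by rewrite lt_def Apos.
have hb : 0 < `|B| + 1 by rewrite ltr_wpDl.
exists (A / (`|B| + 1)); first by rewrite divr_gt0.
move=> e he.
have h1 : `|e * B| <= A.
  rewrite normrM.
  apply: le_trans (ler_wpM2r (normr_ge0 B) he) _.
  by rewrite mulrAC ler_pdivrMr // mulrDr mulr1 lerDl ltW.
have := ler_norm (- (e * B)); rewrite normrN => h2.
lra.
Qed.

Lemma small_all (F : finType) (A B : F -> R) : (forall p, 0 <= A p) -> (forall p, A p = 0 -> B p = 0) ->
  exists2 m, 0 < m & forall p e, `|e| <= m -> 0 <= A p + e * B p.
Proof.
move=> hA hB.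
suff: exists2 m, 0 < m & forall p, p \in enum F -> forall e, `|e| <= m -> 0 <= A p + e * B p.
  by case=> m m0 H; exists m => // p; apply: H; rewrite mem_enum.
elim: (enum F) => [|q l [m m0 IH]]; first by exists 1.
have [mq mq0 Hq] := small1 (A q) (B q) (hA q) (@hB q).
exists (Num.min m mq); first by rewrite lt_min m0 mq0.
move=> p; rewrite inE => /orP [/eqP -> | pl] e he.
  by apply: Hq; apply: le_trans he _; rewrite ge_min lexx orbT.
by apply: IH => //; apply: le_trans he _; rewrite ge_min lexx.
Qed.
Arguments small_all {F A B}.
Variables (F : finType) (s : F -> R) (d : R) (k : int) (x y : F -> R).
Hypothesis hs : forall i, 0 <= s i.
Hypothesis hV : vertexP s d k x y.

Lemma no_dir (u v : F -> R) : \sum_i u i = 0 -> \sum_i v i = 0 ->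
 (forall p, x p = 0 -> u p = 0) -> (forall p, s p * y p - x p = 0 -> s p * v p - u p = 0) ->
 (forall p, y p = 0 -> v p = 0) -> (forall p, 1 - y p = 0 -> v p = 0) ->
 forall p, u p = 0 /\ v p = 0.
Proof.
move=> su sv c1 c2 c3 c4.
case: hV => [[sx sy hx hy] hvert].
have [m1 m10 H1] := small_all (fun p => (hx p).1) c1.
have [m2 m20 H2] := small_all (A := fun p => s p * y p - x p) (B := fun p => s p * v p - u p)
   (fun p => ltac:(rewrite subr_ge0; exact: (hx p).2)) c2.
have [m3 m30 H3] := small_all (fun p => (hy p).1) c3.
have [m4 m40 H4] := small_all (A := fun p => 1 - y p) (B := fun p => - v p)
   (fun p => ltac:(rewrite subr_ge0; exact: (hy p).2)) (fun p h => ltac:(by rewrite /= (c4 p h) oppr0)).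
pose m := Num.min (Num.min m1 m2) (Num.min m3 m4).
have m0 : 0 < m by rewrite !lt_min m10 m20 m30 m40.
have hin : forall e, `|e| <= m -> inP s d k (fun i => x i + e * u i) (fun i => y i + e * v i).
  move=> e he.
  have he1 : `|e| <= m1 by apply: le_trans he _; rewrite /m !ge_min lexx.
  have he2 : `|e| <= m2 by apply: le_trans he _; rewrite /m !ge_min lexx !orbT.
  have he3 : `|e| <= m3 by apply: le_trans he _; rewrite /m !ge_min lexx !orbT.
  have he4 : `|e| <= m4 by apply: le_trans he _; rewrite /m !ge_min lexx !orbT.
  split.
  - by rewrite big_split /= -mulr_sumr su mulr0 addr0.
  - by rewrite big_split /= -mulr_sumr sv mulr0 addr0.
  - move=> i; split; first exact: H1.
    rewrite -subr_ge0; have -> : s i * (y i + e * v i) - (x i + e * u i) = s i * y i - x i + e * (s i * v i - u i) by ring.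
    exact: H2.
  - move=> i; split; first exact: H3.
    rewrite -subr_ge0; have -> : 1 - (y i + e * v i) = 1 - y i + e * (- v i) by ring.
    exact: H4.
have hm : `|m| <= m by rewrite ger0_norm // ltW.
have hm' : `|- m| <= m by rewrite normrN ger0_norm // ltW.
have h2 : (2 : R) != 0 by rewrite pnatr_eq0.
have ht0 : 0 < (2 : R)^-1 by rewrite invr_gt0 ltr0n.
have ht1 : (2 : R)^-1 < 1 by rewrite invf_lt1 ?ltr0n ?ltr1n.
have hxe : forall i, x i = 2^-1 * (x i + m * u i) + (1 - 2^-1) * (x i + - m * u i) by move=> i; field.
have hye : forall i, y i = 2^-1 * (y i + m * v i) + (1 - 2^-1) * (y i + - m * v i) by move=> i; field.
have H := hvert _ _ _ _ _ (hin m hm) (hin (- m) hm') ht0 ht1 hxe hye.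
move=> p; have [Hx Hy] := H p.
have mn : m != 0 by rewrite gt_eqF.
split.
- have : 2 * m * u p = 0 by lra.
  by move/eqP; rewrite !mulf_eq0 (negbTE h2) (negbTE mn) /= => /eqP.
- have : 2 * m * v p = 0 by lra.
  by move/eqP; rewrite !mulf_eq0 (negbTE h2) (negbTE mn) /= => /eqP.
Qed.

Definition a p := if x p == s p * y p then s p else 0.
Definition delta (i p : F) : R := (p == i)%:R.

Lemma sum_delta (f : F -> R) i : \sum_p f p * delta i p = f i.
Proof.
rewrite (bigD1 i) //= big1 ?addr0; first by rewrite /delta eqxx mulr1.
by move=> p /negbTE pi; rewrite /delta pi mulr0.
Qed.

Lemma sum_deltac (c : R) i : \sum_p c * delta i p = c.
Proof. exact: (sum_delta (fun _ => c)). Qed.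

Lemma no_dir2 (v w : F -> R) : (forall p, v p = 0 \/ (0 < y p < 1)) ->
  (forall p, w p = 0 \/ (0 < x p /\ x p < s p * y p)) ->
  \sum_i (a i * v i + w i) = 0 -> \sum_i v i = 0 -> forall p, v p = 0.
Proof.
move=> hv hw su sv p.
case: hV => [[sx sy hx hy] _].
apply: (proj2 (@no_dir (fun p => a p * v p + w p) v su sv _ _ _ _ p)).
- move=> q h.
  have wq : w q = 0 by case: (hw q) => // [[h1 _]]; lra.
  rewrite wq addr0; case: (hv q) => [-> | /andP [y0 _]]; first by rewrite mulr0.
  rewrite /a; case: ifP => [/eqP e|_]; last by rewrite mul0r.
  move: e; rewrite h => /esym/eqP; rewrite mulf_eq0 (gt_eqF y0) orbF => /eqP ->.
  by rewrite mul0r.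
- move=> q h.
  have wq : w q = 0 by case: (hw q) => // [[_ h1]]; lra.
  have xq : x q == s q * y q by rewrite -subr_eq0 -oppr_eq0 opprB h.
  by rewrite wq /a xq addr0 subrr.
- move=> q h; case: (hv q) => [-> //| /andP [h1 _]]; move: h1; rewrite lt_def h eqxx.
  done.
- move=> q h; case: (hv q) => [-> //| /andP [_ h1]]; move: h1; rewrite lt_def; lra.
Qed.

Lemma sum_delta1 i : \sum_p delta i p = 1.
Proof. by rewrite -(sum_deltac 1 i); apply: eq_bigr => p _; rewrite mul1r. Qed.

Lemma main_sec : (forall i, y i \is a Num.int) \/
  (#|[pred i | y i \isn't a Num.int]| = 2%N /\ forall i, x i = 0 \/ x i = s i * y i).
Proof.
case: (hV) => [[sx sy hx hy] _].
have fracP : forall p, y p \isn't a Num.int -> 0 < y p < 1.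
  move=> p; rewrite int01; last by apply/andP; exact: (hy p).
  case/norP => h0 h1; apply/andP; split; first by rewrite lt_def h0 (hy p).1.
  by rewrite lt_neqAle h1 (hy p).2.
set Fr := [pred i | y i \isn't a Num.int].
have hc : (#|Fr| == 0) || (0 < #|Fr|)%N by case: #|Fr|.
case/orP: hc => [/eqP c0|cpos].
  left => i; apply/negPn/negP => hi.
  have : i \in Fr by [].
  by rewrite (card0_eq c0).
have [i iF] := (elimTF card_gt0P cpos).
have ci := cardD1 i Fr; rewrite iF /= in ci.
have hc : (#|[predD1 Fr & i]| == 0) || (0 < #|[predD1 Fr & i]|)%N by case: #|_|.
case/orP: hc => [/eqP c0|cpos1].
  exfalso.
  have hint : forall p, p != i -> y p \is a Num.int.
    move=> p pi; apply/negPn/negP => hp.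
    have : p \in [predD1 Fr & i] by rewrite inE pi.
    by rewrite (card0_eq c0).
  rewrite (bigD1 i) //= in sy.
  have hs1 : \sum_(p | p != i) y p \is a Num.int by apply: rpred_sum => p; exact: hint.
  have e : y i = k%:~R - \sum_(p | p != i) y p by rewrite -sy addrK.
  move: iF; rewrite inE /= e => /negP; apply.
  by rewrite rpredB ?intr_int.
have [j jF] := (elimTF card_gt0P cpos1).
have cj := cardD1 j [predD1 Fr & i]; rewrite jF /= in cj.
move: jF; rewrite inE => /andP [ji jF'].
have fi := fracP i iF; have fj := fracP j jF'.
have hc : (#|[predD1 [predD1 Fr & i] & j]| == 0) || (0 < #|[predD1 [predD1 Fr & i] & j]|)%N by case: #|_|.
case/orP: hc => [/eqP c0|cpos2].
  right; split; first by rewrite ci cj c0.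
  move=> q.
  have [xq0|xq0] := eqVneq (x q) 0; first by left.
  have [xqs|xqs] := eqVneq (x q) (s q * y q); first by right.
  exfalso.
  have hq : 0 < x q /\ x q < s q * y q.
    by split; rewrite lt_neqAle ?(hx q).1 ?(hx q).2 ?xqs // eq_sym xq0.
  have hv' : forall p, (fun p => delta i p - delta j p) p = 0 \/ (0 < y p < 1).
    move=> p; rewrite /delta; case: (eqVneq p i) => [->|pi]; first by right.
    case: (eqVneq p j) => [->|pj]; first by right.
    by left; rewrite subrr.
  have hw' : forall p, (fun p => (a j - a i) * delta q p) p = 0 \/ (0 < x p /\ x p < s p * y p).
    move=> p /=; rewrite /delta; case: (eqVneq p q) => [->|pq]; first by right.
    by left; rewrite mulr0.
  have hsum : \sum_p (a p * (fun p => delta i p - delta j p) p + (fun p => (a j - a i) * delta q p) p) = 0.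
    rewrite big_split /=; under eq_bigr do rewrite mulrBr.
    rewrite sumrB !sum_delta; ring.
  have hsv : \sum_p (fun p => delta i p - delta j p) p = 0.
    by rewrite sumrB !sum_delta1 subrr.
  have := @no_dir2 _ _ hv' hw' hsum hsv i.
  rewrite /= /delta eqxx [i == j]eq_sym (negbTE ji) subr0 => /eqP.
  by rewrite oner_eq0.
exfalso.
have [l lF] := (elimTF card_gt0P cpos2).
move: lF; rewrite !inE => /and3P [lj li lF'].
have fl := fracP l lF'.
have three : forall vi vj vl, vi + vj + vl = 0 -> a i * vi + a j * vj + a l * vl = 0 -> vi = 0 /\ vl = 0.
  move=> vi vj vl h1 h2.
  have H := @no_dir2 (fun p => vi * delta i p + vj * delta j p + vl * delta l p) (fun _ => 0) _ _ _ _.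
  have {}H : forall p, vi * delta i p + vj * delta j p + vl * delta l p = 0.
    apply: H.
    - move=> p; rewrite /delta; case: (eqVneq p i) => [->|pi]; first by right.
      case: (eqVneq p j) => [->|pj]; first by right.
      case: (eqVneq p l) => [->|pl]; first by right.
      by left; rewrite !mulr0 !addr0.
    - by move=> p; left.
    - under eq_bigr do rewrite addr0 !mulrDr.
      rewrite !big_split /=.
      have e : forall c (b : F), \sum_p a p * (c * delta b p) = a b * c.
        move=> c b; rewrite -(sum_delta (fun p => a p * c) b).
        by apply: eq_bigr => p _; rewrite mulrA.
      by rewrite !e -h2; ring.
    - by rewrite !big_split /= !sum_deltac.
  have d1 : forall b, delta b b = 1 by move=> b; rewrite /delta eqxx.
  have d0 : forall b p, p != b -> delta b p = 0 by move=> b p /negbTE h; rewrite /delta h.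
  have hl := H l; have hi := H i.
  rewrite d1 (d0 _ _ li) (d0 _ _ lj) !mulr0 mulr1 !add0r in hl.
  have ij : i != j by rewrite eq_sym.
  have il : i != l by rewrite eq_sym.
  rewrite d1 (d0 _ _ ij) (d0 _ _ il) !mulr0 mulr1 !addr0 in hi.
  by split.
have [eij|nij] := eqVneq (a i) (a j).
  have [h _] := three 1 (-1) 0 ltac:(ring) ltac:(rewrite eij; ring).
  by move/eqP: h; rewrite oner_eq0.
have [_ h] := three (a j - a l) (a l - a i) (a i - a j) ltac:(ring) ltac:(ring).
by move/eqP: h; rewrite subr_eq0 (negbTE nij).
Qed.
End S.

Theorem mainTheorem9 (R : archiRealFieldType) (F : finType) (s : F -> R) (d : R) (k : int)
    (hs : forall i, 0 <= s i) (x y : F -> R) :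
  vertexP s d k x y ->
  (forall i, y i \is a Num.int) \/
  (#|[pred i | y i \isn't a Num.int]| = 2%N /\
   forall i, x i = 0 \/ x i = s i * y i).
Proof.
move=> hV; exact: (@main_sec R F s d k x y hV).
Qed.
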